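(* Let $q\ge 3$ be a prime power and $k$ a positive integer. Then there exists an $[n,k]_q$ MWS code for some positive integer $n$.
   Context: An $[n,k]_q$ code is a $k$-dimensional $\mathbb{F}_q$-linear subspace $\mathcal{C}$ of $\mathbb{F}_q^n$ with the Hamming weight $w(c)=|\{i: c_i\neq 0\}|$. Standing convention: codes of dimension $k\ge 2$ are non-degenerate, i.e. no coordinate position is identically zero on $\mathcal{C}$. The weight set is $w(\mathcal{C})=\{w(c): c\in\mathcal{C}\setminus\{0\}\}$, and $\theta_q(k-1)=\frac{q^k-1}{q-1}$. $\mathcal{C}$ is a maximum weight spectrum (MWS) code if $|w(\mathcal{C})|=\theta_q(k-1)$. *)

(* Defs.v *)
From HB Require Import structures.
From mathcomp Require Import all_boot all_order all_algebra.
Set Implicit Arguments. Unset Strict Implicit. Unset Printing Implicit Defensive.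
Import GRing.Theory.
Local Open Scope ring_scope.

Definition hweight (F : finFieldType) (n : nat) (c : 'rV[F]_n) : nat :=
  #|[set i : 'I_n | c 0 i != 0]|.

Definition weight_set (F : finFieldType) (n : nat) (C : {vspace 'rV[F]_n}) : seq nat :=
  undup [seq hweight c | c <- enum [set c : 'rV[F]_n | (c \in C) && (c != 0)]].

Definition nondegenerate (F : finFieldType) (n : nat) (C : {vspace 'rV[F]_n}) : Prop :=
  forall i : 'I_n, exists2 c : 'rV[F]_n, c \in C & c 0 i != 0.

(* theta_q(k-1) = (q^k - 1)/(q - 1). *)
Definition theta (q k : nat) : nat := ((q ^ k - 1) %/ (q - 1))%N.

Definition MWS_code (F : finFieldType) (n k : nat) (C : {vspace 'rV[F]_n}) : Prop :=
  [/\ \dim C = k, (2 <= k)%N -> nondegenerate C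
    & size (weight_set C) = theta #|F| k].

(* Main.v *)
Require Import Defs.
From mathcomp Require Import all_boot all_order all_algebra.
From mathcomp Require Import zify.
Set Implicit Arguments. Unset Strict Implicit. Unset Printing Implicit Defensive.
Import GRing.Theory.
Local Open Scope ring_scope.


Lemma bin_inj N (b c : 'I_N -> bool) :
  (\sum_(i < N) b i * 2 ^ i = \sum_(i < N) c i * 2 ^ i)%N -> forall i, b i = c i.
Proof.
elim: N b c => [|N IH] b c H i; first by case: i.
have E : forall d : 'I_N.+1 -> bool,
  (\sum_(i < N.+1) d i * 2 ^ i = d ord0 + 2 * \sum_(i < N) d (lift ord0 i) * 2 ^ i)%N.
  move=> d; rewrite big_ord_recl expn0 muln1 big_distrr /=; congr (_ + _)%N.
  by apply: eq_bigr => j _; rewrite /= /bump /= expnS; lia.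
rewrite !E in H.
have h0 : b ord0 = c ord0 by move: H; case: (b ord0); case: (c ord0) => //=; lia.
rewrite h0 in H.
have H2 : (\sum_(i < N) b (lift ord0 i) * 2 ^ i = \sum_(i < N) c (lift ord0 i) * 2 ^ i)%N by lia.
case: (unliftP ord0 i) => [j ->|->] //.
exact: (IH (fun j => b (lift ord0 j)) (fun j => c (lift ord0 j)) H2).
Qed.

Section S.
Variables (F : finFieldType) (k : nat).
Local Notation T := 'rV[F]_k.
Definition dot (u v : T) : F := (u *m v^T) 0 0.
Lemma dot_delta u j : dot u (delta_mx 0 j) = u 0 j.
Proof. by rewrite /dot trmx_delta -colE mxE. Qed.
Lemma delta_dot v j : dot (delta_mx 0 j) v = v 0 j.
Proof. by rewrite /dot -rowE !mxE. Qed.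
Lemma dot_lin u a b x y : dot u (a *: x - b *: y) = a * dot u x - b * dot u y.
Proof. by rewrite /dot linearB /= !linearZ /= mulmxDr -!scalemxAr mulmxN !mxE mulrN. Qed.
Lemma dotZ c u v : dot (c *: u) v = c * dot u v.
Proof. by rewrite /dot -scalemxAl mxE. Qed.
Lemma dot0 u : dot u 0 = 0.
Proof. by rewrite /dot trmx0 mulmx0 mxE. Qed.

Definition S (u : T) : {set T} := [set v | dot u v != 0].

Lemma nz_coord (u : T) : u != 0 -> exists i, u 0 i != 0.
Proof.
move=> Hu; have: ~~ [forall i, u 0 i == 0].
  apply: contra Hu => /forallP H; apply/eqP/rowP => j; rewrite mxE; exact/eqP/H.
by rewrite negb_forall => /existsP.
Qed.

Lemma S_eq u u' : u != 0 -> S u = S u' -> exists2 c, c != 0 & u' = c *: u.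
Proof.
move=> Hu E; have [i ui] := nz_coord Hu.
have key : forall v, (dot u v != 0) = (dot u' v != 0).
  by move=> v; move/setP: E => /(_ v); rewrite !inE.
exists (u' 0 i / u 0 i).
  rewrite mulf_neq0 ?invr_eq0 //. by rewrite -dot_delta -key dot_delta.
apply/rowP => j; rewrite mxE.
have := key (u 0 i *: delta_mx 0 j - u 0 j *: delta_mx 0 i).
rewrite !dot_lin !dot_delta mulrC subrr eqxx => /esym/negbFE/eqP.
move/eqP; rewrite subr_eq0 => /eqP h.
by rewrite -[u' 0 j](mulKf ui) h mulrCA mulrC [_^-1 * _]mulrC. Qed.

Lemma SZ c u : c != 0 -> S (c *: u) = S u.
Proof. by move=> hc; apply/setP => v; rewrite !inE dotZ mulf_eq0 negb_or hc. Qed.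

Definition enc (X : {set T}) : nat := (\sum_(i < #|T|) (enum_val i \in X) * 2 ^ i)%N.
Lemma enc_inj : injective enc.
Proof.
move=> X Y /bin_inj H; apply/setP => x.
by rewrite -(enum_rankK x); apply: H.
Qed.

Definition mlt (v : T) : nat := ((v != 0%R) * 2 ^ enum_rank v)%N.
Definition MM : nat := (2 ^ #|T|)%N.
Definition AA : {set T * 'I_MM} := [set x : T * 'I_MM | (x.2 < mlt x.1)%N].
Definition nn : nat := #|AA|.
Definition colv (j : 'I_nn) : T := (enum_val j).1.
Definition GG : 'M[F]_(k, nn) := \matrix_(i, j) (colv j) 0 i.

Lemma GE u j : (u *m GG) 0 j = dot u (colv j).
Proof. rewrite /dot !mxE; apply: eq_bigr => i _; rewrite !mxE //. Qed.

Lemma mlt_le v : (mlt v <= MM)%N.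
Proof.
rewrite /mlt /MM; case: (v != 0); rewrite ?mul0n ?mul1n //.
by rewrite leq_pexp2l // ltnW.
Qed.

Lemma hweightE u : hweight (u *m GG) = enc (S u).
Proof.
rewrite /hweight -sum1_card.
rewrite (eq_bigl (fun j : 'I_nn => dot u (enum_val j).1 != 0)); last first.
  by move=> j; rewrite !inE GE.
rewrite -(big_enum_val_cond (fun x : T * 'I_MM => dot u x.1 != 0) (fun _ => 1%N)).
rewrite (eq_bigl (fun x : T * 'I_MM => (x.2 < mlt x.1)%N && (dot u x.1 != 0))); last first.
  by move=> x; rewrite inE.
rewrite -(pair_big_dep xpredT (fun v (t : 'I_MM) => (t < mlt v)%N && (dot u v != 0)) (fun _ _ => 1%N)) /=.
rewrite /enc (eq_bigr (fun i => (enum_val i \in S u) * 2 ^ enum_rank (enum_val i)))%N; last first.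
  by move=> i _; rewrite enum_valK.
rewrite -(big_enum_val (A := T) (fun v => (v \in S u) * 2 ^ enum_rank v)%N).
apply: eq_bigr => v _; rewrite inE.
case: (boolP (dot u v != 0)) => h; last first.
  by rewrite big1 // => t; rewrite andbF.
rewrite (eq_bigl (fun t : 'I_MM => (t < mlt v)%N)); last by move=> t; rewrite andbT.
rewrite (big_ord_narrow (mlt_le v)) sum1_card card_ord /mlt.
have -> : (v != 0) by apply: contraNneq h => ->; rewrite dot0.
by rewrite mul1n.
Qed.

Definition UU : {set T} := [set~ 0].

Lemma count_classes : (#|[set S u | u in UU]| * #|F|.-1 = (#|F| ^ k).-1)%N.
Proof.
have := partition_big_imset (aop := addn) S UU (fun _ => 1%N).
rewrite sum1_card cardsC1 card_mx mul1n => ->.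
rewrite -sum_nat_const; apply: eq_bigr => X /imsetP [u0 Hu0 ->].
rewrite sum1dep_card.
have Hu0' : u0 != 0 by move: Hu0; rewrite !inE.
rewrite -(cardsC1 (0 : F)) -(card_imset _ (fun c d (E : c *: u0 = d *: u0) => _ : c = d)).
  apply: eq_card => u; rewrite !inE; apply/idP/idP.
    case/imsetP => c; rewrite !inE => hc ->.
    by rewrite scaler_eq0 negb_or hc Hu0' (SZ _ hc) eqxx.
  case/andP => hu /eqP E; have [c hc ->] := S_eq Hu0' (esym E).
  by apply/imsetP; exists c; rewrite ?inE //.
by move=> c d /eqP; rewrite -subr_eq0 -scalerBl scaler_eq0 (negPf Hu0') orbF subr_eq0 => /eqP.
Qed.

Lemma GG_inj : injective (fun u : T => u *m GG).
Proof.
move=> u u' /= E; apply/eqP; rewrite -subr_eq0; apply/negPn/negP => H.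
have Z : (u - u') *m GG = 0 by rewrite mulmxBl E subrr.
have : hweight ((u - u') *m GG) = 0%N.
  rewrite Z /hweight; apply/eqP; rewrite cards_eq0; apply/eqP/setP => j.
  by rewrite !inE mxE eqxx.
rewrite hweightE.
have [i hi] := nz_coord H.
have Hm : (delta_mx 0 i : T) \in S (u - u') by rewrite inE dot_delta.
rewrite /enc (bigD1 (enum_rank (delta_mx 0 i : T))) //= enum_rankK Hm mul1n.
by move/eqP; rewrite addn_eq0 expn_eq0.
Qed.

Definition CC : {vspace 'rV[F]_nn} := limg (linfun (mulmxr GG)).

Lemma memCC c : (c \in CC) = [exists u : T, c == u *m GG].
Proof.
apply/memv_imgP/existsP => [[u _ ->]|[u /eqP ->]].
  by exists u; rewrite lfunE.
by exists u; rewrite ?memvf ?lfunE.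
Qed.

Lemma weight_setE : weight_set CC =i map enc (enum [set S u | u in UU]).
Proof.
move=> w; rewrite mem_undup; apply/mapP/mapP => [[c]|[X]].
  rewrite mem_enum inE memCC => /andP [/existsP [u /eqP ->] hu] ->.
  exists (S u); last by rewrite hweightE.
  rewrite mem_enum; apply/imsetP; exists u => //.
  by rewrite !inE; apply: contraNneq hu => ->; rewrite mul0mx.
rewrite mem_enum => /imsetP [u hu ->] ->.
exists (u *m GG); last by rewrite hweightE.
rewrite mem_enum inE memCC; apply/andP; split; first by apply/existsP; exists u.
apply/eqP => E; move: hu; rewrite !inE; apply/negP/negPn/eqP.
by apply: GG_inj; rewrite /= E mul0mx.
Qed.

Lemma size_ws : size (weight_set CC) = #|[set S u | u in UU]|.
Proof.
rewrite (perm_size (uniq_perm (undup_uniq _) _ weight_setE)).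
  by rewrite size_map -cardE.
by rewrite map_inj_uniq ?enum_uniq //; exact: enc_inj.
Qed.
End S.

Local Close Scope ring_scope.

Theorem mainTheorem2 (q : nat)
  (hq : exists p e : nat, [/\ prime p, (0 < e)%N & q = p ^ e])
  (hq3 : (3 <= q)%N)
  (F : finFieldType) (hF : #|F| = q)
  (k : nat) (hk : (0 < k)%N) :
  exists n : nat, (0 < n)%N /\ exists C : {vspace 'rV[F]_n}, @MWS_code F n k C.
Proof.
Local Open Scope ring_scope.
have e0nz : (delta_mx 0 (Ordinal hk) : 'rV[F]_k) != 0.
  apply/eqP => H; have := congr1 (fun M : 'rV[F]_k => M 0 (Ordinal hk)) H.
  by rewrite !mxE !eqxx /=; apply/eqP; rewrite oner_eq0.
exists (nn F k); split.
  apply/card_gt0P.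
  have h0 : (0 < MM F k)%N by rewrite /MM expn_gt0.
  exists (delta_mx 0 (Ordinal hk), Ordinal h0).
  by rewrite inE /= /mlt e0nz mul1n expn_gt0.
exists (CC F k); split.
- rewrite /CC limg_dim_eq; last first.
    rewrite capfv; apply/eqP/lker0P => x y; rewrite !lfunE /=; exact: GG_inj.
  rewrite dimvf dim_matrix; exact: mul1n.
- move=> _ j.
  have hv : colv j != 0.
    have := enum_valP j; rewrite inE /colv /mlt.
    by apply: contraTneq => ->; rewrite eqxx mul0n.
  have [i hi] := nz_coord hv.
  exists (delta_mx 0 i *m GG F k); first by rewrite memCC; apply/existsP; exists (delta_mx 0 i).
  by rewrite GE delta_dot.
- rewrite size_ws /theta subn1.
  have hq1 : (0 < #|F|.-1)%N by rewrite hF; clear hq; case: q hq3 hF => [|[|]].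
  by rewrite -(count_classes F k) subn1 mulnK.
Qed.
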